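(* Let $(G,+)$ be a group and let $(G,+,* )$ and $(G,+,\odot)$ be interchange near rings with underlying group $(G,+)$. Define $\varepsilon_*(x)=x*0$, $\eta_*(x)=0*x$, $\varepsilon_\odot(x)=x\odot 0$, $\eta_\odot(x)=0\odot x$. Then $(G,+,* )\cong(G,+,\odot)$ (as interchange near rings) if and only if the pairs $(\varepsilon_*,\eta_* )$ and $(\varepsilon_\odot,\eta_\odot)$ are similar, i.e. there exists $\alpha\in\mathrm{Aut}(G,+)$ with $\alpha^{-1}\varepsilon_*\alpha = \varepsilon_\odot$ and $\alpha^{-1}\eta_*\alpha = \eta_\odot$.
   Context: An interchange near ring is a triple $(G,+,\bullet)$ where $(G,+)$ is a group (written additively, not necessarily abelian, identity $0$) and $\bullet$ is a binary operation on $G$ satisfying the interchange law $(w+x)\bullet(y+z) = (w\bullet y)+(x\bullet z)$ for all $w,x,y,z\in G$. An isomorphism of interchange near rings $(G_1,+_1,\bullet_1)\to(G_2,+_2,\bullet_2)$ is a bijective group homomorphism $\varphi$ with $\varphi(x\bullet_1 y)=\varphi(x)\bullet_2\varphi(y)$ for all $x,y$. Composition of maps is written $\alpha\beta = \alpha\circ\beta$. *)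

(* Defs.v *)
Set Implicit Arguments.

Record is_group (G : Type) (add : G -> G -> G) (zero : G) (neg : G -> G) : Prop := {
  grp_assoc : forall x y z, add x (add y z) = add (add x y) z;
  grp_id_l : forall x, add zero x = x;
  grp_id_r : forall x, add x zero = x;
  grp_inv_l : forall x, add (neg x) x = zero;
  grp_inv_r : forall x, add x (neg x) = zero
}.

Definition interchange (G : Type) (add : G -> G -> G) (bullet : G -> G -> G) : Prop :=
  forall w x y z, bullet (add w x) (add y z) = add (bullet w y) (bullet x z).

Definition interchange_near_ring (G : Type) (add : G -> G -> G) (zero : G)
  (neg : G -> G) (bullet : G -> G -> G) : Prop :=
  is_group add zero neg /\ interchange add bullet.

Definition group_hom (G : Type) (add : G -> G -> G) (f : G -> G) : Prop :=
  forall x y, f (add x y) = add (f x) (f y).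

Definition bijective_fun (G : Type) (f : G -> G) : Prop :=
  (forall x y, f x = f y -> x = y) /\ (forall y, exists x, f x = y).

Definition inr_isomorphic (G : Type) (add : G -> G -> G) (b1 b2 : G -> G -> G) : Prop :=
  exists phi : G -> G, bijective_fun phi /\ group_hom add phi /\
    (forall x y, phi (b1 x y) = b2 (phi x) (phi y)).

Definition similar_pairs (G : Type) (add : G -> G -> G)
  (e1 h1 e2 h2 : G -> G) : Prop :=
  exists alpha alpha_inv : G -> G,
    group_hom add alpha /\
    (forall x, alpha_inv (alpha x) = x) /\ (forall x, alpha (alpha_inv x) = x) /\
    (forall x, alpha_inv (e1 (alpha x)) = e2 x) /\
    (forall x, alpha_inv (h1 (alpha x)) = h2 x).

(* Main.v *)
Require Import Defs.
From Stdlib Require Import ClassicalEpsilon.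

Lemma decomp (G : Type) (add : G -> G -> G) (zero : G) (neg : G -> G)
  (b : G -> G -> G) (H : interchange_near_ring add zero neg b) :
  forall x y, b x y = add (b x zero) (b zero y).
Proof.
  destruct H as [Hg Hi]. intros x y.
  rewrite <- (Hi x zero zero y). now rewrite (grp_id_r Hg), (grp_id_l Hg).
Qed.

Lemma hom_zero (G : Type) (add : G -> G -> G) (zero : G) (neg : G -> G)
  (Hg : is_group add zero neg) (f : G -> G) (Hf : group_hom add f) : f zero = zero.
Proof.
  assert (E : f zero = add (f zero) (f zero)) by (rewrite <- Hf; now rewrite (grp_id_l Hg)).
  assert (E2 : add (neg (f zero)) (f zero) = add (neg (f zero)) (add (f zero) (f zero)))
    by (now rewrite <- E).
  rewrite (grp_assoc Hg), (grp_inv_l Hg), (grp_id_l Hg) in E2. auto.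
Qed.

Lemma inv_hom (G : Type) (add : G -> G -> G) (a b : G -> G)
  (Ha : group_hom add a) (K1 : forall x, b (a x) = x) (K2 : forall x, a (b x) = x) :
  group_hom add b.
Proof.
  intros x y. rewrite <- (K2 x) at 1. rewrite <- (K2 y) at 1.
  rewrite <- Ha. apply K1.
Qed.

Theorem theorem3p5 (G : Type) (add : G -> G -> G) (zero : G) (neg : G -> G)
  (star odot : G -> G -> G)
  (Hstar : interchange_near_ring add zero neg star)
  (Hodot : interchange_near_ring add zero neg odot) :
  inr_isomorphic add star odot <->
  similar_pairs add (fun x => star x zero) (fun x => star zero x)
                    (fun x => odot x zero) (fun x => odot zero x).
Proof.
  pose proof (proj1 Hstar) as Hg. split.
  - intros [phi [[Hinj Hsur] [Hh Hm]]].
    set (psi := fun y => proj1_sig (constructive_indefinite_description _ (Hsur y))).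
    assert (K2 : forall y, phi (psi y) = y)
      by (intro y; unfold psi; destruct constructive_indefinite_description; auto).
    assert (K1 : forall x, psi (phi x) = x) by (intro x; apply Hinj; auto).
    assert (Z : phi zero = zero) by (eapply hom_zero; eauto).
    exists psi, phi. repeat split; auto.
    + eapply inv_hom; eauto.
    + intro x. rewrite Hm, Z, K2. reflexivity.
    + intro x. rewrite Hm, Z, K2. reflexivity.
  - intros [a [b [Ha [K1 [K2 [He Hh]]]]]].
    assert (Hb : group_hom add b) by (eapply inv_hom; eauto).
    exists b. split; [split|split; auto].
    + intros x y E. rewrite <- (K2 x), <- (K2 y), E. reflexivity.
    + intro y. exists (a y). auto.
    + intros x y. rewrite (decomp _ _ _ _ _ Hstar x y), (decomp _ _ _ _ _ Hodot (b x) (b y)).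
      rewrite Hb, <- He, <- Hh, !K2. reflexivity.
Qed.
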